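(* Let $M$ be a smooth manifold, $H$ a closed $3$-form, and $L\subset\mathbb TM=TM\oplus T^*M$ a Dirac structure of the exact Courant algebroid with Dorfman bracket $[[\cdot,\cdot]]=[[\cdot,\cdot]]^H$. Let $E\to M$ be a vector bundle, $D=\nabla+V$ a generalized connection on $E$, and $\nabla^K$ an affine connection on $M$. Then the restriction to $L$ of the $K$-curvature $R^K_D$ equals the curvature of the $L$-connection $D|_L$, i.e. $R^K_D(a,b)=[D_a,D_b]-D_{[[a,b]]}$ for all $a,b\in\Gamma(L)$, if and only if $\langle V,\phi^{KL}\rangle=0$, i.e. $V_{\phi^{KL}(a,b)}=0$ for all $a,b\in\Gamma(L)$. Moreover, if $E=\mathbb TM$ and $D$ preserves $L$ (i.e. $D_ab\in\Gamma(L)$ for all $a,b\in\Gamma(L)$), then the restriction to $L$ of the $K$-torsion $T^K_D$ equals the torsion of $D|_L$, i.e. $T^K_D(a,b)=D_ab-D_ba-[[a,b]]$ for all $a,b\in\Gamma(L)$, if and only if $\phi^{KL}=0$.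
   Context: Exact Courant algebroid: $\mathbb TM=TM\oplus T^*M$ with pairing $\langle X+\xi,Y+\eta\rangle=\eta(X)+\xi(Y)$, anchor the projection to $TM$, and Dorfman bracket $[[X+\xi,Y+\eta]]^H=L_X(Y+\eta)-\iota_Yd\xi+\iota_Y\iota_XH$. A Dirac structure is a maximal isotropic subbundle $L\subset\mathbb TM$ whose sections are closed under $[[\cdot,\cdot]]$; it is a Lie algebroid with the restricted bracket. Write $\rho:L\to TM$ and $\rho_{T^*}:L\to T^*M$ for the two projections. A generalized connection on $E$ is $D=\nabla+V$ with $\nabla$ a connection on $E$ and $V\in\Gamma(TM\otimes\mathrm{End}\,E)$, acting by $D_{X+\xi}=\nabla_X+V_\xi$ ($V_\xi$ = contraction of $V$ with $\xi$). For the affine connection $\nabla^K$ (extended to $T^*M$ by duality), define $\phi^{KL}\in\Gamma(\Lambda^2L^*\otimes T^*M)$ by $\phi^{KL}(a,b)=\rho_{T^*}([[a,b]])+\nabla^K_{\rho(b)}(\rho_{T^*}(a))-\nabla^K_{\rho(a)}(\rho_{T^*}(b))$. The $K$-curvature $R^K_D\in\Gamma(\Lambda^2\mathbb TM\otimes\mathrm{End}\,E)$ is $R^K_D(X+\xi,Y+\eta)=R_\nabla(X,Y)+(\nabla^{K}_XV)_\eta-(\nabla^{K}_YV)_\xi+[V_\xi,V_\eta]$, where $R_\nabla$ is the curvature of $\nabla$ and $(\nabla^K_XV)_\eta=\nabla_X\circ V_\eta-V_\eta\circ\nabla_X-V_{\nabla^K_X\eta}$ is the covariant derivative of $V$ with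 respect to the connection on $TM\otimes\mathrm{End}\,E$ induced by $\nabla^K$ and $\nabla$. When $E=\mathbb TM$ (so $\nabla$ is a connection on $\mathbb TM$), the $K$-torsion $T^K_D\in\Gamma(\Lambda^2\mathbb TM\otimes\mathbb TM)$ is $T^K_D(X+\xi,Y+\eta)=T_\nabla(X,Y)+T_V(\xi,\eta)+T^{(1,1)}(X,\eta)-T^{(1,1)}(Y,\xi)$, where $T_\nabla(X,Y)=\nabla_XY-\nabla_YX-[X,Y]$ (Lie bracket of vector fields), $T_V(\xi,\eta)=V_\xi\eta-V_\eta\xi$, and $T^{(1,1)}(X,\eta)=\nabla_X\eta-\nabla^K_X\eta-V_\eta X$. *)

(* Defs.v *)
(* Algebraic (Lie--Rinehart) model of the smooth setting:
   A  = C^oo(M)  (a commutative ring),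
   X  = Gamma(TM) (an A-module), with the anchor action  act x f = x(f)  and the
        Lie bracket br of vector fields,
   1-forms = A-linear maps X -> A  (Gamma(T^*M) = Hom_A(Gamma(TM), A)),
   Gamma(TM + T^*M) = pairs (x, xi) with xi an A-linear form,
   tensors are multilinear maps. *)
From HB Require Import structures.
From mathcomp Require Import all_boot all_algebra.
Set Implicit Arguments. Unset Strict Implicit. Unset Printing Implicit Defensive.
Import GRing.Theory.
Local Open Scope ring_scope.

Section Defs.
Variables (A : comPzRingType) (X : lmodType A).
Variable act : X -> A -> A.
Variable br  : X -> X -> X.

Definition lie_rinehart : Prop :=
  ( (forall (a : A) x y f, act (a *: x + y) f = a * act x f + act y f) /\
      (forall x f g, act x (f + g) = act x f + act x g) /\
      (forall x f g, act x (f * g) = f * act x g + g * act x f) /\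
      (forall x y z, br (x + y) z = br x z + br y z) /\
      (forall x y, br x y = - br y x) /\
      (forall x y z, br x (br y z) = br (br x y) z + br y (br x z)) /\
      (forall x (f : A) y, br x (f *: y) = f *: br x y + act x f *: y) /\
      (forall x y f, act (br x y) f = act x (act y f) - act y (act x f))).

Definition lin_form (xi : X -> A) : Prop :=
  forall (a : A) x y, xi (a *: x + y) = a * xi x + xi y.

Definition zero_form : X -> A := fun _ => 0.

Definition closed_3form (H : X -> X -> X -> A) : Prop :=
  [/\ (forall (a : A) x x' y z, H (a *: x + x') y z = a * H x y z + H x' y z),
      (forall x y z, H x y z = - H y x z),
      (forall x y z, H x y z = - H x z y) &
      (forall w x y z,
         act w (H x y z) - act x (H w y z) + act y (H w x z) - act z (H w x y)
         - H (br w x) y z + H (br w y) x z - H (br w z) x y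
         - H (br x y) w z + H (br x z) w y - H (br y z) w x = 0)].

Definition TT := (X * (X -> A))%type.

Definition is_sec (a : TT) : Prop := lin_form a.2.

Definition TTadd (a b : TT) : TT := (a.1 + b.1, fun z => a.2 z + b.2 z).
Definition TTopp (a : TT) : TT := (- a.1, fun z => - a.2 z).
Definition TTscale (f : A) (a : TT) : TT := (f *: a.1, fun z => f * a.2 z).
Definition TTzero : TT := (0, zero_form).

Definition pairing (a b : TT) : A := b.2 a.1 + a.2 b.1.

Definition lieD (x : X) (eta : X -> A) : X -> A :=
  fun z => act x (eta z) - eta (br x z).
Definition contr_d (y : X) (xi : X -> A) : X -> A :=
  fun z => act y (xi z) - act z (xi y) - xi (br y z).

(* Dorfman bracket [[X+xi, Y+eta]]^H = L_X(Y+eta) - iota_Y d xi + iota_Y iota_X H *)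
Definition dorfman (H : X -> X -> X -> A) (a b : TT) : TT :=
  (br a.1 b.1, fun z => lieD a.1 b.2 z - contr_d b.1 a.2 z + H a.1 b.1 z).

(* Dirac structure: L is (the module of sections of) a maximal isotropic
   subbundle, closed under the Dorfman bracket. *)
Definition dirac (H : X -> X -> X -> A) (L : TT -> Prop) : Prop :=
  ( (forall a, L a -> is_sec a) /\
      L TTzero /\
      (forall a b, L a -> L b -> L (TTadd a b)) /\
      (forall f a, L a -> L (TTscale f a)) /\
      (forall a b, L a -> L b -> pairing a b = 0) /\
      (forall c, is_sec c -> (forall a, L a -> pairing c a = 0) -> L c) /\
      (forall a b, L a -> L b -> L (dorfman H a b))).

(* A module of sections, given by its operations and a predicate singling out
   the genuine sections. *)
Record modops := ModOps {
  mcar :> Type; madd : mcar -> mcar -> mcar; mopp : mcar -> mcar;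
  mscale : A -> mcar -> mcar; msec : mcar -> Prop }.

Definition lmod_ops (E : lmodType A) : modops :=
  @ModOps E +%R -%R *:%R (fun _ => True).

Definition TT_ops : modops := @ModOps TT TTadd TTopp TTscale is_sec.

Definition msub (E : modops) (e e' : E) : E := madd e (mopp e').

Definition is_connection (E : modops) (nab : X -> E -> E) : Prop :=
  [/\ (forall x e, msec e -> msec (nab x e)),
      (forall (a : A) x y e, msec e ->
         nab (a *: x + y) e = madd (mscale a (nab x e)) (nab y e)),
      (forall x e e', msec e -> msec e' -> nab x (madd e e') = madd (nab x e) (nab x e')) &
      (forall x (f : A) e, msec e ->
         nab x (mscale f e) = madd (mscale f (nab x e)) (mscale (act x f) e))].

(* V in Gamma(TM (x) End E): V_xi e, tensorial in xi and in e *)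
Definition is_VTensor (E : modops) (V : (X -> A) -> E -> E) : Prop :=
  [/\ (forall xi e, lin_form xi -> msec e -> msec (V xi e)),
      (forall (a : A) xi eta e, lin_form xi -> lin_form eta -> msec e ->
         V (fun z => a * xi z + eta z) e = madd (mscale a (V xi e)) (V eta e)),
      (forall xi e e', lin_form xi -> msec e -> msec e' ->
         V xi (madd e e') = madd (V xi e) (V xi e')) &
      (forall xi (f : A) e, lin_form xi -> msec e -> V xi (mscale f e) = mscale f (V xi e))].

Definition is_gen_connection (E : modops) (nab : X -> E -> E) (V : (X -> A) -> E -> E) :=
  is_connection nab /\ is_VTensor V.

Definition Dgen (E : modops) (nab : X -> E -> E) (V : (X -> A) -> E -> E) (a : TT) (e : E) : E :=
  madd (nab a.1 e) (V a.2 e).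

Definition is_affine_connection (nK : X -> X -> X) : Prop :=
  [/\ (forall (a : A) x y z, nK (a *: x + y) z = a *: nK x z + nK y z),
      (forall x y z, nK x (y + z) = nK x y + nK x z) &
      (forall x (f : A) y, nK x (f *: y) = f *: nK x y + act x f *: y)].

Definition dualK (nK : X -> X -> X) (x : X) (xi : X -> A) : X -> A :=
  fun y => act x (xi y) - xi (nK x y).

(* phi^{KL}(a,b) = rho_T*([[a,b]]) + nabla^K_{rho b} rho_T*(a) - nabla^K_{rho a} rho_T*(b) *)
Definition phiKL (H : X -> X -> X -> A) (nK : X -> X -> X) (a b : TT) : X -> A :=
  fun z => (dorfman H a b).2 z + dualK nK b.1 a.2 z - dualK nK a.1 b.2 z.

Section Curv.
Variables (E : modops) (nab : X -> E -> E) (V : (X -> A) -> E -> E).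

Definition Rnab (x y : X) (e : E) : E :=
  msub (msub (nab x (nab y e)) (nab y (nab x e))) (nab (br x y) e).

Definition covV (nK : X -> X -> X) (x : X) (eta : X -> A) (e : E) : E :=
  msub (msub (nab x (V eta e)) (V eta (nab x e))) (V (dualK nK x eta) e).

Definition RK (nK : X -> X -> X) (a b : TT) (e : E) : E :=
  madd (msub (madd (Rnab a.1 b.1 e) (covV nK a.1 b.2 e)) (covV nK b.1 a.2 e))
       (msub (V a.2 (V b.2 e)) (V b.2 (V a.2 e))).

Definition curvL (H : X -> X -> X -> A) (a b : TT) (e : E) : E :=
  msub (msub (Dgen nab V a (Dgen nab V b e)) (Dgen nab V b (Dgen nab V a e)))
       (Dgen nab V (dorfman H a b) e).
End Curv.

Section Tors.
Variables (nab : X -> TT -> TT) (V : (X -> A) -> TT -> TT).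

Definition inT (x : X) : TT := (x, zero_form).
Definition inTs (xi : X -> A) : TT := (0, xi).

Definition Tnab (x y : X) : TT :=
  msub (E := TT_ops) (msub (E := TT_ops) (nab x (inT y)) (nab y (inT x))) (inT (br x y)).
Definition TV (xi eta : X -> A) : TT :=
  msub (E := TT_ops) (V xi (inTs eta)) (V eta (inTs xi)).
Definition T11 (nK : X -> X -> X) (x : X) (eta : X -> A) : TT :=
  msub (E := TT_ops) (msub (E := TT_ops) (nab x (inTs eta)) (inTs (dualK nK x eta)))
       (V eta (inT x)).

Definition TK (nK : X -> X -> X) (a b : TT) : TT :=
  msub (E := TT_ops)
    (TTadd (TTadd (Tnab a.1 b.1) (TV a.2 b.2)) (T11 nK a.1 b.2)) (T11 nK b.1 a.2).

Definition torsL (H : X -> X -> X -> A) (a b : TT) : TT :=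
  msub (E := TT_ops)
    (msub (E := TT_ops) (Dgen (E := TT_ops) nab V a b) (Dgen (E := TT_ops) nab V b a))
    (dorfman H a b).
End Tors.

End Defs.

(* Main.v *)
Require Import Defs.
From HB Require Import structures.
From mathcomp Require Import all_boot all_algebra ring.
From Stdlib Require Import FunctionalExtensionality.
Import GRing.Theory.
Local Open Scope ring_scope.

Module Helpers.
Set Implicit Arguments. Unset Strict Implicit.
Section H.
Variables (A : comPzRingType) (X : lmodType A).

Lemma lin_add (f : X -> A) u v : lin_form f -> f (u + v) = f u + f v.
Proof. by move=> lf; rewrite -[u]scale1r lf mul1r scale1r. Qed.
Lemma lin0 (f : X -> A) : lin_form f -> f 0 = 0.
Proof. move=> lf; have := lin_add 0 0 lf; rewrite addr0 => h.
by apply: (@addrI _ (f 0)); rewrite addr0 -h. Qed.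
Lemma lin_scale (f : X -> A) c u : lin_form f -> f (c *: u) = c * f u.
Proof. by move=> lf; rewrite -[c *: u]addr0 lf lin0 // addr0. Qed.

Lemma lin_comb (f g : X -> A) (c : A) : lin_form f -> lin_form g ->
  lin_form (fun z => c * f z + g z).
Proof. move=> lf lg a x y; rewrite lf lg; ring. Qed.

Lemma lin_zero : lin_form (zero_form (X:=X)).
Proof. move=> a x y; rewrite /zero_form; ring. Qed.

Variables (act : X -> A -> A) (br : X -> X -> X).

Lemma act_add x f g : lie_rinehart act br -> act x (f + g) = act x f + act x g.
Proof. by case=> _ [h _]. Qed.
Lemma act_mul x f g : lie_rinehart act br -> act x (f * g) = f * act x g + g * act x f.
Proof. by case=> _ [_ [h _]]. Qed.

Lemma lin_dualK nK x (eta : X -> A) : lie_rinehart act br ->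
  is_affine_connection act nK -> lin_form eta -> lin_form (dualK act nK x eta).
Proof.
move=> LR [_ nK2 nK3] le c u v; rewrite /dualK.
rewrite le act_add // act_mul // nK2 nK3 !lin_add // !lin_scale //; ring.
Qed.
End H.
End Helpers.
Import Helpers.
Ltac push t := repeat rewrite (addrAC _ t).
Ltac canc t := push t; push (-t); rewrite addrK.

Lemma part1 (A : comPzRingType) (X : lmodType A) (act : X -> A -> A) (br : X -> X -> X)
  (H : X -> X -> X -> A) (L : TT X -> Prop) (nK : X -> X -> X) :
  lie_rinehart act br -> dirac act br H L -> is_affine_connection act nK ->
  forall (E : lmodType A) (nab : X -> E -> E) (V : (X -> A) -> E -> E),
     is_gen_connection act (E := lmod_ops E) nab V ->
     forall a b : TT X, L a -> L b -> forall e : E,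
        RK act br (E := lmod_ops E) nab V nK a b e
        = curvL act br (E := lmod_ops E) nab V H a b e + V (phiKL act br H nK a b) e.
Proof.
move=> LR [Lsec [_ [_ [_ [_ [_ Ldor]]]]]] aK E nab V [[_ _ n3 _] [_ V2 V3 _]] a b La Lb e.
have la := Lsec _ La; have lb := Lsec _ Lb; have ld := Lsec _ (Ldor _ _ La Lb).
case: a La la ld => x xi La /= lxi; case: b Lb lb => y eta Lb /= leta ld.
have lKx := lin_dualK x LR aK leta.
have lKy := lin_dualK y LR aK lxi.
have -> : phiKL act br H nK (x, xi) (y, eta) =
  (fun z => (-1) * dualK act nK x eta z + (fun z => 1 * (dorfman act br H (x, xi) (y, eta)).2 z + dualK act nK y xi z) z).
  by apply: functional_extensionality => z; rewrite /phiKL /=; ring.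
rewrite V2 //=; last exact: lin_comb.
rewrite V2 //=.
rewrite /RK /curvL /Rnab /covV /Dgen /msub /=.
rewrite !n3 // !V3 // !scaleN1r !scale1r.
apply/eqP; rewrite -subr_eq0; apply/eqP.
rewrite !opprD !opprK !addrA -[LHS]add0r !addrA.
set d := V (fun z => _) e.
canc (nab x (nab y e)); canc (nab y (nab x e)); canc (nab (br x y) e).
canc (nab x (V eta e)); canc (V eta (nab x e)); canc (V (dualK act nK x eta) e).
canc (nab y (V xi e)); canc (V xi (nab y e)); canc (V (dualK act nK y xi) e).
canc (V xi (V eta e)); canc (V eta (V xi e)); canc d; done.
Qed.

Lemma part2 (A : comPzRingType) (X : lmodType A) (act : X -> A -> A) (br : X -> X -> X)
  (H : X -> X -> X -> A) (L : TT X -> Prop) (nK : X -> X -> X) :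
  dirac act br H L ->
  forall (nab : X -> TT X -> TT X) (V : (X -> A) -> TT X -> TT X),
     is_gen_connection act (E := TT_ops X) nab V ->
     forall a b : TT X, L a -> L b ->
        TK act br nab V nK a b = TTadd (torsL act br nab V H a b) (inTs (phiKL act br H nK a b)).
Proof.
move=> [Lsec _] nab V [[_ _ n3 _] [_ _ V3 _]] a b La Lb.
have la := Lsec _ La; have lb := Lsec _ Lb.
case: a La la => x xi La /= lxi; case: b Lb lb => y eta Lb /= leta.
have eb : forall (u : X) (f : X -> A), (u, f) = TTadd (inT u) (inTs f).
  move=> u f; rewrite /TTadd /= addr0; congr pair.
  by apply: functional_extensionality => z; rewrite /zero_form add0r.
have sT : forall u : X, is_sec (inT u) by move=> u; exact: lin_zero.
rewrite /torsL /Dgen /= [X in nab x X]eb [X in nab y X]eb.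
rewrite [X in V xi X]eb [X in V eta X]eb.
have n3' : forall x e e', is_sec e -> is_sec e' -> nab x (TTadd e e') = TTadd (nab x e) (nab x e') := n3.
have V3' : forall xi e e', lin_form xi -> is_sec e -> is_sec e' -> V xi (TTadd e e') = TTadd (V xi e) (V xi e') := V3.
rewrite !n3' // !V3' //.
rewrite /TK /Tnab /TV /T11 /msub /= /TTadd /TTopp /phiKL /=.
congr pair.
  rewrite !subr0 addr0.
  apply/eqP; rewrite -subr_eq0; apply/eqP.
  rewrite !opprD !opprK !addrA -[LHS]add0r !addrA.
  canc (nab x (inT y)).1; canc (nab y (inT x)).1; canc (br x y).
  canc (V xi (inTs eta)).1; canc (V eta (inTs xi)).1; canc (nab x (inTs eta)).1.
  canc (V eta (inT x)).1; canc (nab y (inTs xi)).1; canc (V xi (inT y)).1; done.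
apply: functional_extensionality => z; rewrite /zero_form; ring.
Qed.

Theorem proposition5p2
  (A : comPzRingType) (X : lmodType A) (act : X -> A -> A) (br : X -> X -> X)
  (H : X -> X -> X -> A) (L : TT X -> Prop) (nK : X -> X -> X) :
  lie_rinehart act br ->
  closed_3form act br H ->
  dirac act br H L ->
  is_affine_connection act nK ->
  (forall (E : lmodType A) (nab : X -> E -> E) (V : (X -> A) -> E -> E),
     is_gen_connection act (E := lmod_ops E) nab V ->
     (forall a b : TT X, L a -> L b -> forall e : E,
        RK act br (E := lmod_ops E) nab V nK a b e
        = curvL act br (E := lmod_ops E) nab V H a b e)
     <->
     (forall a b : TT X, L a -> L b -> forall e : E,
        V (phiKL act br H nK a b) e = 0))
  /\
  (forall (nab : X -> TT X -> TT X) (V : (X -> A) -> TT X -> TT X),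
     is_gen_connection act (E := TT_ops X) nab V ->
     (forall a b : TT X, L a -> L b -> L (Dgen (E := TT_ops X) nab V a b)) ->
     (forall a b : TT X, L a -> L b ->
        TK act br nab V nK a b = torsL act br nab V H a b)
     <->
     (forall a b : TT X, L a -> L b -> forall z : X,
        phiKL act br H nK a b z = 0)).
Proof.
move=> LR _ DL aK; split.
  move=> E nab V GC; split.
    move=> h a b La Lb e.
    have h1 := @part1 _ _ _ _ _ _ _ LR DL aK _ _ _ GC _ _ La Lb e.
    move: h1; rewrite (h a b La Lb e) -[X in X = _]addr0.
    by move/addrI.
  move=> h a b La Lb e.
  by rewrite (@part1 _ _ _ _ _ _ _ LR DL aK _ _ _ GC _ _ La Lb e) (h a b La Lb e) addr0.
move=> nab V GC _; split.
  move=> h a b La Lb z.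
  have h2 := @part2 _ _ _ _ _ _ nK DL _ _ GC _ _ La Lb.
  rewrite (h a b La Lb) in h2.
  have h3 := congr1 (fun p : TT X => p.2 z) h2.
  move: h3 => /=; rewrite -[LHS]addr0.
  by move/addrI.
move=> h a b La Lb.
rewrite (@part2 _ _ _ _ _ _ nK DL _ _ GC _ _ La Lb).
case: (torsL _ _ _ _ _ _ _) => u f.
rewrite /TTadd /= addr0; congr pair.
by apply: functional_extensionality => z; rewrite h // addr0.
Qed.
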